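(* Let $B(X)\in\mathbb Z[X]$ be monic and irreducible, and suppose $B$ has a non-real root $\beta$ such that every root of $B$ other than $\beta$ and $\overline\beta$ has absolute value strictly less than $|\beta|$. Let $\alpha\in\mathbb Z$ with $|\alpha|>1$, and suppose there are coprime positive integers $p,q$ with $\alpha^{2p}=(\beta\overline\beta)^q$. Then $B(X)=X^2+aX+N$ for some $a\in\mathbb Z$ and positive integer $N$ with $a^2-4N<0$, and there is an integer $b>1$ with $N=b^p$ and $|\alpha|=b^{q/2}$; in particular, if $b$ is not a perfect square then $q$ is even. *)

(* Defs.v *)
From HB Require Import structures.
From mathcomp Require Export all_boot all_order all_algebra all_field.
Set Implicit Arguments. Unset Strict Implicit. Unset Printing Implicit Defensive.

(* Main.v *)
Require Import Defs.
From mathcomp Require Import all_boot all_order all_algebra all_field.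
From mathcomp Require Import ring.
Import Order.TTheory GRing.Theory Num.Theory.
Local Open Scope ring_scope.

Definition Qpol (A : rat) (q : nat) : {poly {poly rat}} :=
  ('X^q : {poly rat}) *: 'X^q - ((A%:P)%:P).
Definition Hres (P : {poly rat}) (A : rat) (q : nat) : {poly rat} :=
  resultant (map_poly polyC P) (Qpol A q).

Lemma res_root (P : {poly rat}) (A : rat) (q : nat) (x : algC) :
  (0 < q)%N -> x != 0 -> P \is monic ->
  root (map_poly ratr (Hres P A q)) x <->
  exists y, root (map_poly ratr P) y /\ x ^+ q * y ^+ q = ratr A.
Proof.
move=> q0 x0 mP.
pose f : {rmorphism {poly rat} -> algC} := horner_eval x \o map_poly ratr.
have fE u : f u = (map_poly ratr u).[x] by [].
have lQ : lead_coef (Qpol A q) = 'X^q.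
  rewrite /Qpol lead_coefDl ?lead_coefZ ?lead_coefXn ?mulr1 //.
  rewrite size_opp size_scale; last by rewrite monic_neq0 ?monicXn.
  rewrite size_polyC (leq_ltn_trans (leq_b1 _)) //.
  by rewrite -[X in (_ < X)%N]/(size ('X^q : {poly {poly rat}})) size_polyXn.
have mapP : map_poly f (map_poly polyC P) = map_poly ratr P.
  rewrite -map_poly_comp; apply: eq_map_poly => c /=.
  by rewrite horner_evalE map_polyC hornerC.
have mapQ : map_poly f (Qpol A q) = (x ^+ q) *: 'X^q - (ratr A)%:P.
  rewrite /Qpol rmorphB /= map_polyZ map_polyXn map_polyC /=.
  by rewrite !horner_evalE map_polyC map_polyXn hornerC hornerXn.
rewrite /root /Hres -[X in X == 0]/(f (resultant _ _)) map_resultant; last 2 first.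
- rewrite lead_coef_map_eq (monicP mP) ?fE ?map_polyC ?hornerC ?rmorph1 ?oner_eq0 //.
  by rewrite fmorph_eq0 oner_eq0.
- have -> : f (lead_coef (Qpol A q)) = x ^+ q.
    by rewrite lQ fE map_polyXn hornerXn.
  by rewrite expf_neq0.
rewrite mapP mapQ resultant_eq0.
set g := gcdp _ _.
split.
- move=> sg; have : size g != 1 by rewrite gtn_eqF.
  move/closed_rootP=> [y]; rewrite root_gcd => /andP[ry].
  rewrite /root !hornerE subr_eq0 => /eqP e; exists y; split => //.
- move=> [y [ry e]].
  have gz : g != 0.
    by rewrite gcdp_eq0 negb_and map_poly_eq0 monic_neq0.
  apply: (root_size_gt1 gz); rewrite root_gcd; apply/andP; split; first exact: ry.
  by rewrite /root !hornerE e subrr.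
Qed.

Lemma conj_roots (B : {poly int}) (beta : algC) :
  irreducible_poly B -> root (map_poly intr B) beta ->
  forall r : {poly rat}, root (map_poly ratr r) beta ->
  forall g : algC, root (map_poly intr B) g -> root (map_poly ratr r) g.
Proof.
move=> irrB rB r rr g rg.
pose Bq := map_poly (intr : int -> rat) B.
have BqC : map_poly ratr Bq = map_poly intr B :> {poly algC}.
  by rewrite -map_poly_comp; apply: eq_map_poly => c /=; rewrite ratr_int.
have [p0 [Dp0 mon0] min0] := minCpolyP beta.
have irrQ : irreducible_poly Bq by apply/irreducible_rat_int.
have dv : p0 %| Bq by rewrite -min0 BqC.
have s0 : size p0 != 1.
  have := size_minCpoly beta; rewrite Dp0 size_map_poly => h.
  by rewrite gtn_eqF.
have e : p0 %= Bq := irrQ.2 p0 s0 dv.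
have : Bq %| r by rewrite -(eqp_dvdl _ e) -min0.
rewrite -(dvdp_map (ratr : {rmorphism rat -> algC})) BqC => d.
exact: root_dvdp d rg.
Qed.

Lemma deriv_neq0 (p : {poly rat}) : (1 < size p)%N -> p^`() != 0.
Proof.
move=> s; apply/eqP => h.
have := congr1 (fun u : {poly rat} => u`_(size p).-2) h => /=.
rewrite coef_deriv coef0 -mulr_natr => /eqP; rewrite mulf_eq0; apply/negP; rewrite negb_or.
have -> : (size p).-2.+1 = (size p).-1 by case: (size p) s => [|[|n]].
rewrite -lead_coefE lead_coef_eq0 pnatr_eq0 -size_poly_eq0.
by case: (size p) s => [|[|n]].
Qed.

Lemma deriv_nonroot (B : {poly int}) (beta : algC) :
  irreducible_poly B -> root (map_poly intr B) beta ->
  ~~ root (map_poly intr B)^`() beta.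
Proof.
move=> irrB rB; apply/negP => rd.
pose Bq := map_poly (intr : int -> rat) B.
have BqC u : map_poly ratr (map_poly (intr : int -> rat) u) = map_poly intr u :> {poly algC}.
  by rewrite -map_poly_comp; apply: eq_map_poly => c /=; rewrite ratr_int.
have [p0 [Dp0 mon0] min0] := minCpolyP beta.
have irrQ : irreducible_poly Bq by apply/irreducible_rat_int.
have dv : p0 %| Bq by rewrite -min0 BqC.
have s0 : size p0 != 1.
  have := size_minCpoly beta; rewrite Dp0 size_map_poly => h.
  by rewrite gtn_eqF.
have e : p0 %= Bq := irrQ.2 p0 s0 dv.
have : Bq %| Bq^`().
  rewrite -(eqp_dvdl _ e) -min0 deriv_map BqC -deriv_map //.
have nz := deriv_neq0 Bq irrQ.1.
move/(dvdp_leq nz); rewrite leqNgt lt_size_deriv //.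
by rewrite -size_poly_gt0 (ltn_trans _ irrQ.1).
Qed.

Lemma int_of_root (c : algC) (n : nat) (N : int) : (0 < n)%N -> c \in Crat ->
  c ^+ n = N%:~R -> exists c' : int, c = c'%:~R.
Proof.
move=> n0 cQ e.
have rc : root ('X^n - (N%:~R)%:P) c by rewrite /root !hornerE e subrr.
have : c \in Aint.
  apply: (root_monic_Aint rc); first by rewrite monicXnsubC.
  apply/polyOverP => i; rewrite coefB coefXn coefC.
  apply: rpredB; first exact: rpred_nat.
  by case: ifP => _; rewrite ?rpred_int ?rpred0.
move/(Cint_rat_Aint cQ)/intrP => [c' ->]; by exists c'.
Qed.

Lemma coprime_pow (N A : int) (p q : nat) : 0 < N -> 0 < A -> (0 < p)%N -> (0 < q)%N ->
  coprime p q -> N ^+ q = A ^+ p ->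
  exists b : int, [/\ 0 < b, N = b ^+ p & A = b ^+ q].
Proof.
move=> N0 A0 p0 q0 cpq e.
have [a _ /dvdnP[k ek]] := Bezoutl p q0.
rewrite gcdnC (eqP cpq) in ek.
pose NC : algC := N%:~R; pose AC : algC := A%:~R.
have NC0 : 0 < NC by rewrite ltr0z.
have AC0 : 0 < AC by rewrite ltr0z.
have eC : NC ^+ q = AC ^+ p by rewrite /NC /AC -!rmorphXn /= e.
pose b := AC ^+ k / NC ^+ a.
have NCa0 : NC ^+ a != 0 by rewrite expf_neq0 // gt_eqF.
have NCap0 : NC ^+ (a * p) != 0 by rewrite expf_neq0 // gt_eqF.
have E1 : AC ^+ (k * p) = NC ^+ (a * p).+1.
  by rewrite mulnC exprM -eC -exprM -add1n ek mulnC.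
have E2 : NC ^+ (a * q) = AC ^+ (a * p).
  by rewrite mulnC exprM eC -exprM mulnC.
have bp : b ^+ p = NC.
  rewrite /b exprMn exprVn -!exprM E1 exprS -mulrA mulfV ?mulr1 //.
have bq : b ^+ q = AC.
  rewrite /b exprMn exprVn -!exprM E2 -ek add1n exprS -mulrA mulfV ?mulr1 //.
  by rewrite expf_neq0 // gt_eqF.
have bQ : b \in Crat by rewrite rpred_div ?rpredX ?rpred_int.
have [b' eb] := @int_of_root b p N p0 bQ bp.
have b0 : 0 < b by rewrite divr_gt0 ?exprn_gt0.
exists b'; split.
- by rewrite -(ltr0z algC) -eb.
- by apply: (intr_inj (R:=algC)); rewrite rmorphXn /= -eb bp.
- by apply: (intr_inj (R:=algC)); rewrite rmorphXn /= -eb bq.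
Qed.

Lemma odd_sq (al b : int) (q : nat) : 0 < b -> al ^+ 2 = b ^+ q -> odd q ->
  exists c : int, b = c ^+ 2.
Proof.
move=> b0 e oq.
have eq : q = (q./2).*2.+1 by rewrite -[in LHS](odd_double_half q) oq.
pose bC : algC := b%:~R; pose aC : algC := al%:~R.
have bC0 : bC ^+ q./2 != 0 by rewrite expf_neq0 // intr_eq0 gt_eqF.
have eC : aC ^+ 2 = bC ^+ q by rewrite /aC /bC -!rmorphXn /= e.
pose c := aC / bC ^+ q./2.
have c2 : c ^+ 2 = bC.
  rewrite /c exprMn exprVn eC -exprM muln2.
  have bd : bC ^+ (q./2).*2 != 0 by rewrite expf_neq0 // intr_eq0 gt_eqF.
  by rewrite {1}eq exprS mulrK // unitfE.
have cQ : c \in Crat by rewrite rpred_div ?rpredX ?rpred_int.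
have [c' ec] := @int_of_root c 2 b isT cQ c2.
exists c'; apply: (intr_inj (R:=algC)); by rewrite rmorphXn /= -ec c2.
Qed.

Theorem mainTheorem6 (B : {poly int}) (beta : algC) (alpha : int) (p q : nat) :
  B \is monic ->
  irreducible_poly B ->
  root (map_poly intr B) beta ->
  beta \notin Num.real ->
  (forall z : algC, root (map_poly intr B) z -> z != beta -> z != beta^* ->
     `|z| < `|beta|) ->
  1 < `|alpha| ->
  (0 < p)%N -> (0 < q)%N -> coprime p q ->
  (alpha%:~R : algC) ^+ (2 * p) = (beta * beta^*) ^+ q ->
  exists a N : int,
    [/\ 0 < N,
        B = 'X^2 + a%:P * 'X + N%:P,
        a ^+ 2 - 4 * N < 0 &
        exists b : int,
          [/\ 1 < b, N = b ^+ p,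
              (`|alpha|%:~R : algC) = sqrtC (b%:~R) ^+ q &
              ((~ exists c : int, b = c ^+ 2) -> ~~ odd q)]].
Proof.
move=> monB irrB rB nrB domB al1 p0 q0 cpq eab.
set Bc : {poly algC} := map_poly intr B in rB domB.
have bb : beta != beta^* by move: nrB; rewrite CrealE eq_sym.
have b0 : beta != 0 by apply: contraNneq nrB => ->; rewrite real0.
have nb0 : 0 < `|beta| by rewrite normr_gt0.
have rBc : root Bc beta^*.
  have -> : Bc = map_poly Num.Def.conjC Bc.
    rewrite /Bc -map_poly_comp; apply: eq_map_poly => c /=; by rewrite rmorph_int.
  by rewrite fmorph_root.
have bnd z : root Bc z -> `|z| <= `|beta|.
  move=> rz; have [->|nzb] := eqVneq z beta; first by [].
  have [->|nzb'] := eqVneq z beta^*; first by rewrite norm_conjC.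
  exact/ltW/domB.
pose Bq := map_poly (intr : int -> rat) B.
have BqC : map_poly ratr Bq = Bc.
  by rewrite -map_poly_comp; apply: eq_map_poly => c /=; rewrite ratr_int.
have key g : root Bc g -> g = beta \/ g = beta^*.
  move=> rg.
  have mBq : Bq \is monic by rewrite monicE /Bq lead_coef_map_eq (monicP monB) ?rmorph1 ?oner_eq0.
  pose Aq : rat := (alpha ^+ (2 * p))%:~R.
  have AqC : ratr Aq = (alpha%:~R : algC) ^+ (2 * p) by rewrite ratr_int rmorphXn.
  have rH : root (map_poly ratr (Hres Bq Aq q)) beta.
    apply: (@res_root Bq Aq q beta q0 b0 mBq).2; exists beta^*; split; first by rewrite BqC.
    by rewrite AqC eab exprMn.
  have rHg := @conj_roots B beta irrB rB _ rH g rg.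
  have [g0|gn0] := eqVneq g 0.
    exfalso.
    have : root Bc (ratr 0) by rewrite rmorph0 -g0.
    rewrite -BqC fmorph_root -dvdp_XsubCl => dX.
    have irrQ : irreducible_poly Bq by apply/irreducible_rat_int.
    have sX : size ('X - (0 : rat)%:P) != 1 by rewrite size_XsubC.
    have ex := irrQ.2 _ sX dX.
    case/andP: ex => _.
    rewrite -(dvdp_map (ratr : {rmorphism rat -> algC})) BqC => /root_dvdp/(_ rB).
    rewrite map_polyXsubC root_XsubC rmorph0 => /eqP bz.
    by move: b0; rewrite bz eqxx.
  have [d [rd e]] := (@res_root Bq Aq q g q0 gn0 mBq).1 rHg.
  rewrite BqC in rd.
  have en : `|g| * `|d| = `|beta| * `|beta|.
    have : (g * d) ^+ q = (beta * beta^*) ^+ q by rewrite exprMn e AqC eab.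
    move/(congr1 (fun x : algC => `|x|)); rewrite !normrX => /(pexpIrn q0).
    rewrite !normrM norm_conjC => h; apply: h; rewrite nnegrE mulr_ge0 //.
  have [->|gb] := eqVneq g beta; first by left.
  have [->|gb'] := eqVneq g beta^*; first by right.
  have lt := domB g rg gb gb'.
  exfalso; move: en; apply/eqP; rewrite lt_eqF //.
  apply: (le_lt_trans (y := `|g| * `|beta|)).
    by rewrite ler_wpM2l ?bnd.
  by rewrite ltr_pM2r.
have dnr z : root Bc z -> ~~ root Bc^`() z := fun rz => @deriv_nonroot B z irrB rz.
have sep : separable_poly Bc.
  rewrite unlock /coprimep; apply/negPn/negP => /closed_rootP [x].
  rewrite root_gcd => /andP[rx rdx]; by move: (dnr x rx); rewrite rdx.
have [rs Drs] := closed_field_poly_normal Bc.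
have lBc : lead_coef Bc = 1.
  by rewrite /Bc lead_coef_map_eq (monicP monB) ?rmorph1 ?oner_eq0.
rewrite lBc scale1r in Drs.
have urs : uniq rs by rewrite -separable_prod_XsubC -Drs.
have prs : perm_eq rs [:: beta; beta^*].
  apply: uniq_perm => //; first by rewrite /= inE bb.
  move=> z; rewrite -root_prod_XsubC -Drs !inE; apply/idP/idP.
  - by move/key => [->|->]; rewrite eqxx ?orbT.
  - by case/orP => /eqP ->.
have eBc : Bc = ('X - beta%:P) * ('X - beta^*%:P).
  by rewrite Drs (perm_big _ prs) !big_cons big_nil /= mulr1.
have sBc : size Bc = 3 by rewrite eBc size_mul ?polyXsubC_eq0 // !size_XsubC.
have sB : size B = 3 by rewrite -sBc /Bc size_map_inj_poly //; apply: intr_inj.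
set a := B`_1; set N := B`_0.
have eB : B = 'X^2 + a%:P * 'X + N%:P.
  apply/polyP => i; rewrite coefD coefD coefXn coefCM coefX coefC.
  case: i => [|[|[|i]]] /=; rewrite ?mulr0 ?mulr1 ?addr0 ?add0r //.
    by have := monicP monB; rewrite lead_coefE sB.
  by rewrite nth_default // sB.
have eBc2 : Bc = 'X^2 + (a%:~R)%:P * 'X + (N%:~R)%:P.
  by rewrite /Bc {1}eB !rmorphD !rmorphM /= !map_polyX !map_polyC expr2.
have r1 : beta ^+ 2 + a%:~R * beta + N%:~R = 0.
  by move: rB; rewrite /root eBc2 !hornerE => /eqP.
have r2 : beta^* ^+ 2 + a%:~R * beta^* + N%:~R = 0.
  by move: rBc; rewrite /root eBc2 !hornerE => /eqP.
have ea : (a%:~R : algC) = - (beta + beta^*).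
  have : (beta - beta^*) * (a%:~R + (beta + beta^*)) = 0.
    rewrite -[RHS](subrr 0) -{1}r1 -r2; ring.
  move/eqP; rewrite mulf_eq0 subr_eq0 (negbTE bb) /= addr_eq0 => /eqP ->.
  done.
have eN : (N%:~R : algC) = beta * beta^*.
  apply/eqP; rewrite -subr_eq0 -r1 ea; apply/eqP; ring.
exists a, N.
have N0 : 0 < N by rewrite -(ltr0z algC) eN -normCK exprn_gt0.
split => //.
  rewrite -(ltrz0 algC) rmorphB rmorphXn rmorphM /= ea eN.
  have e4 : ((4 : int)%:~R : algC) = 4%:R by [].
  rewrite e4.
  have -> : (- (beta + beta^*)) ^+ 2 - 4%:R * (beta * beta^*) =
     - ((beta - beta^*) * (beta - beta^*)^*).
    rewrite rmorphB /= conjCK; ring.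
  by rewrite -normCK oppr_lt0 exprn_gt0 // normr_gt0 subr_eq0.
have eN' : alpha ^+ (2 * p) = N ^+ q.
  by apply: (intr_inj (R:=algC)); rewrite !rmorphXn /= eab eN.
have al0 : 0 < `|alpha| by apply: lt_trans al1.
have A0 : 0 < alpha ^+ 2 by rewrite -real_normK ?num_real // exprn_gt0.
have A1 : 1 < alpha ^+ 2 by rewrite -real_normK ?num_real // exprn_egt1.
have eNA : N ^+ q = (alpha ^+ 2) ^+ p by rewrite -exprM eN'.
have [b [bpos eNb eAb]] := @coprime_pow N (alpha ^+ 2) p q N0 A0 p0 q0 cpq eNA.
exists b; split => //.
- rewrite ltNge; apply/negP => b1.
  have := exprn_ile1 q (ltW bpos) b1; rewrite -eAb leNgt A1 //.
- apply: (pexpIrn (isT : (0 < 2)%N)); rewrite ?nnegrE ?exprn_ge0 ?sqrtC_ge0 ?ler0z ?normr_ge0 //.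
    exact: ltW.
  have h : (`|alpha| : int) ^+ 2 = alpha ^+ 2 := real_normK (num_real _).
  rewrite -rmorphXn /= h -exprM mulnC exprM sqrtCK -rmorphXn /=.
  by rewrite eAb.
- move=> nsq; apply/negP => oq; apply: nsq; exact: (@odd_sq alpha b q bpos eAb oq).
Qed.
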